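(* Let $x\in\mathbb{R}^m$, let $Y$ be a finite set of classes, let $f:\mathbb{R}^m\to Y$ be a (measurable) classifier, and let $\{\psi_\delta\}_{\delta>0}$, $\psi_\delta:\mathbb{R}^m\to\mathbb{R}^m$, be a multiplicatively composable transformation. Let $\beta\sim\mathrm{Rayleigh}(\sigma)$ for some $\sigma>0$ and define the smoothed classifier $g(x)=\arg\max_{c\in Y}\mathbb{P}_\beta\big(f(\psi_\beta(x))=c\big)$. Let $c_A\in Y$ and put $$p_A=\mathbb{P}_\beta\big(f(\psi_\beta(x))=c_A\big),\qquad p_B=\max_{c_B\neq c_A}\mathbb{P}_\beta\big(f(\psi_\beta(x))=c_B\big).$$ Suppose $\underline{p_A},\overline{p_B}\in(0,1)$ satisfy $p_A\ge\underline{p_A}>\overline{p_B}\ge p_B$. Let $F(z)=1-e^{-z^2/(2\sigma^2)}$ ($z\ge 0$) be the CDF of $\beta$, and let $\gamma_1\in(0,1]$ and $\gamma_2\ge 1$ be the unique solutions of $$F\big(\gamma_1^{-1}F^{-1}(\overline{p_B})\big)+F\big(\gamma_1^{-1}F^{-1}(1-\underline{p_A})\big)=1,$$ $$F\big(\gamma_2^{-1}F^{-1}(\underline{p_A})\big)+F\big(\gamma_2^{-1}F^{-1}(1-\overline{p_B})\big)=1.$$ Then $g(\psi_\gamma(x))=c_A$ for every $\gamma$ with $\gamma_1<\gamma<\gamma_2$.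
   Context: A parameterized family of maps $\psi_\delta:X\to X$, $\delta\in\mathcal{B}\subset\mathbb{R}^n$, is called multiplicatively composable if $\psi_\delta\circ\psi_\theta=\psi_{\delta\cdot\theta}$ for all $\delta,\theta\in\mathcal{B}$, where $\delta\cdot\theta\in\mathcal{B}$ denotes the element-wise product. A random variable $\zeta$ has the Rayleigh distribution with scale $\sigma>0$, written $\zeta\sim\mathrm{Rayleigh}(\sigma)$, if it has density $p_\zeta(z)=\sigma^{-2}z\,e^{-z^2/(2\sigma^2)}$ for $z\ge 0$ (and $0$ for $z<0$). *)

(* Defs.v *)
From HB Require Import structures.
From mathcomp Require Import all_boot all_order all_algebra.
From mathcomp Require Import all_classical all_reals all_analysis.
Set Implicit Arguments. Unset Strict Implicit. Unset Printing Implicit Defensive.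
Import Order.TTheory GRing.Theory Num.Theory.
Local Open Scope classical_set_scope.
Local Open Scope ring_scope.

Definition mult_composable (R : realType) (X : Type) (psi : R -> X -> X) : Prop :=
  forall d t : R, 0 < d -> 0 < t -> forall v, psi d (psi t v) = psi (d * t) v.

Definition rayleigh_pdf (R : realType) (sigma z : R) : R :=
  if 0 <= z then sigma ^- 2 * z * expR (- z ^+ 2 / (2 * sigma ^+ 2)) else 0.

Definition rayleigh_prob (R : realType) (sigma : R) (A : set R) : \bar R :=
  (\int[@lebesgue_measure R]_(z in A) (rayleigh_pdf sigma z)%:E)%E.

(* P_beta( f(psi_beta(v)) = c ); beta > 0 almost surely, psi only defined for delta > 0 *)
Definition smoothed_prob (R : realType) (X Y : Type) (f : X -> Y)
    (psi : R -> X -> X) (sigma : R) (v : X) (c : Y) : \bar R :=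
  rayleigh_prob sigma [set z | 0 < z /\ f (psi z v) = c].

(* g(v) = c, where g(v) = argmax_c P_beta(f(psi_beta v) = c): c is the (unique) argmax,
   i.e. g(v) = c for every tie-breaking rule. *)
Definition smoothed_pred (R : realType) (X : Type) (Y : finType) (f : X -> Y)
    (psi : R -> X -> X) (sigma : R) (v : X) (c : Y) : Prop :=
  forall c', c' != c -> (smoothed_prob f psi sigma v c' < smoothed_prob f psi sigma v c)%E.

Definition rayleigh_cdf (R : realType) (sigma z : R) : R :=
  1 - expR (- z ^+ 2 / (2 * sigma ^+ 2)).

Definition rayleigh_cdf_inv (R : realType) (sigma p : R) : R :=
  xget 0 [set z : R | 0 <= z /\ rayleigh_cdf sigma z = p].

(* Main.v *)
Require Import Defs.
From HB Require Import structures.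
From mathcomp Require Import all_boot all_order all_algebra.
From mathcomp Require Import all_classical all_reals all_analysis.
From mathcomp Require Import ring lra measurable_realfun.
Import Order.TTheory GRing.Theory Num.Theory.
Import numFieldTopology.Exports.
Local Open Scope classical_set_scope.
Local Open Scope ring_scope.

Section R.
Context {R : realType}.
Implicit Types s z : R.

Definition pdfT s z : R := s ^- 2 * z * expR (- z ^+ 2 / (2 * s ^+ 2)).
Definition antid s z : R := - expR (- z ^+ 2 / (2 * s ^+ 2)).

Lemma is_derive_antid s z : 0 < s -> is_derive z 1 (antid s) (pdfT s z).
Proof.
move=> s0.
rewrite /antid.
have H1 : is_derive z 1 (fun z : R => - z ^+ 2 / (2 * s ^+ 2)) (- (2 * z) / (2 * s ^+ 2)).
  apply: is_derive_eq.
  rewrite scaler0 add0r /GRing.scale /= mulr1 -mulrN mulrC; congr (_ * _).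
  by rewrite mulrN mulr2n mulrDl !mul1r.
have H3 : is_derive z 1 (fun z0 => - expR (- z0 ^+ 2 / (2 * s ^+ 2)))
   (- (expR (- z ^+ 2 / (2 * s ^+ 2)) * (- (2 * z) / (2 * s ^+ 2)))).
  apply: is_deriveN.
have H4 : (- (expR (- z ^+ 2 / (2 * s ^+ 2)) * (- (2 * z) / (2 * s ^+ 2)))) = pdfT s z.
  rewrite /pdfT /=. field.
by rewrite gt_eqF.
by rewrite -H4.
Qed.

Lemma pdfT_cont s : continuous (pdfT s).
Proof.
move=> z; rewrite /pdfT.
apply: (@continuousM _ R^o (fun z => s ^- 2 * z) (fun z => expR (- z ^+ 2 / (2 * s ^+ 2)))).
  apply: (@continuousM _ R^o (fun=> s ^- 2) id); first exact: cst_continuous.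
  exact: cvg_id.
apply: continuous_comp; last exact: continuous_expR.
apply: (@continuousM _ R^o (fun z => - z ^+ 2) (fun=> (2 * s ^+ 2)^-1)); last exact: cst_continuous.
apply: (@continuousN _ R^o).
exact: exprn_continuous.
Qed.

Lemma pdfE s : rayleigh_pdf s = pdfT s \_ `[0, +oo[.
Proof.
apply/funext => z; rewrite /rayleigh_pdf patchE /pdfT.
have -> : (z \in `[0, +oo[%classic) = (0 <= z).
  by apply/idP/idP; [rewrite inE /= in_itv /= andbT | move=> h; rewrite inE /= in_itv /= h].
case: ifP => //.
Qed.

Lemma pdf_ge0 s z : 0 <= rayleigh_pdf s z.
Proof.
rewrite /rayleigh_pdf; case: ifP => // z0.
by rewrite mulr_ge0 ?expR_ge0 // mulr_ge0 // invr_ge0 sqr_ge0.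
Qed.

Lemma measurable_pdf s : measurable_fun [set: R] (rayleigh_pdf s).
Proof.
rewrite pdfE; apply/measurable_restrict => //; apply: measurable_funTS.
exact: continuous_measurable_fun (pdfT_cont s).
Qed.


Local Notation mu := (@lebesgue_measure R).

Lemma antid_derivable s z : 0 < s -> derivable (antid s) z 1.
Proof. by move=> s0; have [] := @is_derive_antid s z s0. Qed.

Lemma antid_cont s : 0 < s -> continuous (antid s).
Proof.
move=> s0 z; apply/differentiable_continuous/derivable1_diffP.
exact: antid_derivable.
Qed.

Lemma antid_deriv s z : 0 < s -> (antid s)^`()%classic z = pdfT s z.
Proof.
move=> s0; rewrite derive1E; have [_ ->] := @is_derive_antid s z s0; done.
Qed.

Lemma cdf0 s : rayleigh_cdf s 0 = 0.
Proof. by rewrite /rayleigh_cdf expr0n /= oppr0 mul0r expR0 subrr. Qed.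

Lemma lower_int s t : 0 < s -> 0 <= t ->
  (\int[mu]_(z in `[0%R, t]) (rayleigh_pdf s z)%:E = (rayleigh_cdf s t)%:E)%E.
Proof.
move=> s0; rewrite le_eqVlt => /predU1P[<-|t0].
  by rewrite set_itv1 integral_set1 cdf0.
transitivity (\int[mu]_(z in `[0%R, t]) (pdfT s z)%:E)%E.
  apply: eq_integral => z; rewrite inE /= in_itv /= => /andP[z0 _].
  by rewrite /rayleigh_pdf z0.
rewrite (@continuous_FTC2 _ _ (antid s)) //.
- rewrite /antid /rayleigh_cdf expr0n /= oppr0 mul0r expR0 -EFinB; congr EFin.
  by rewrite opprK addrC.
- exact: continuous_subspaceT (pdfT_cont s).
- split.
  + by move=> z _; exact: antid_derivable.
  + exact/cvg_at_right_filter/antid_cont.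
  + exact/cvg_at_left_filter/antid_cont.
- by move=> z _; exact: antid_deriv.
Qed.


Lemma antid_cvgy s : 0 < s -> antid s x @[x --> +oo] --> 0.
Proof.
move=> s0.
rewrite (_ : antid s = (fun x => - expR (- x)) \o (fun x => (2 * s ^+ 2)^-1 * x ^+ 2)); last first.
  by apply/funext => x; rewrite /antid /= mulrC mulrN.
rewrite -oppr0; apply: cvgN.
apply: (@cvg_comp _ _ _ (fun x => (2 * s ^+ 2)^-1 * x ^+ 2) (fun z => expR (- z)) _ (pinfty_nbhs R)); last exact: cvgr_expR.
apply: gt0_cvgMry; last exact: cvgr_expr2.
by rewrite invr_gt0 mulr_gt0 // exprn_gt0.
Qed.

Lemma upper_int s t : 0 < s -> 0 <= t ->
  (\int[mu]_(z in `[t, +oo[) (rayleigh_pdf s z)%:E = (1 - rayleigh_cdf s t)%:E)%E.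
Proof.
move=> s0 t0.
transitivity (\int[mu]_(z in `[t, +oo[) (pdfT s z)%:E)%E.
  apply: eq_integral => z; rewrite inE /= in_itv /= andbT => tz.
  by rewrite /rayleigh_pdf (le_trans t0 tz).
rewrite (@ge0_continuous_FTC2y _ (pdfT s) (antid s) t 0) //.
- rewrite /antid /rayleigh_cdf -EFinB; congr EFin.
  by rewrite sub0r opprK opprB addrC subrK.
- move=> x tx; have := pdf_ge0 s x; rewrite /rayleigh_pdf (le_trans t0 tx) //.
- exact: continuous_subspaceT (pdfT_cont s).
- exact: antid_cvgy.
- exact/cvg_at_right_filter/antid_cont.
- by move=> z _; exact: antid_deriv.
Qed.

Lemma mscale_lem (k : R) (k0 : 0 < k) (X : set R) :
  measurable X ->
  mu X = (k%:E * mu ((fun z : R => (z * k)%R) @^-1` X))%E.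
Proof.
move=> mX.
apply: (@lebesgue_measure_unique R (mscale (NngNum (ltW k0)) (pushforward mu ((fun z : R => z * k) : _ -> measurableTypeR R)))) => //.
  exact: mulrr_measurable.
move=> ? _ [[a b]] _ <-.
change (mu `]a, b]%classic = (k%:E * mu ((fun z : R => (z * k)%R) @^-1` `]a, b]%classic))%E).
have -> : (fun z : R => (z * k)%R) @^-1` `]a, b]%classic = `](a / k)%R, (b / k)%R]%classic.
  apply/seteqP; split => z /=; rewrite !in_itv /= => /andP[h1 h2]; apply/andP; split.
  - by rewrite ltr_pdivrMr.
  - by rewrite ler_pdivlMr.
  - by rewrite -ltr_pdivrMr.
  - by rewrite -ler_pdivlMr.
rewrite !lebesgue_measure_itv /= !lte_fin ltr_pM2r ?invr_gt0 //.
case: ifP => _; last by rewrite mule0.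
rewrite -EFinB -EFinM; congr EFin; field; by rewrite gt_eqF.
Qed.

Lemma pdf_scale (s k z : R) : 0 < s -> 0 < k ->
  rayleigh_pdf s z = k * rayleigh_pdf (s * k) (z * k).
Proof.
move=> s0 k0; rewrite /rayleigh_pdf.
have [z0|z0] := leP 0 z.
  rewrite mulr_ge0 // ?ltW //.
  have -> : (- (z * k) ^+ 2 / (2 * (s * k) ^+ 2)) = (- z ^+ 2 / (2 * s ^+ 2)).
    by field; rewrite !gt_eqF.
  by field; rewrite !gt_eqF.
rewrite ifF ?mulr0 //; apply/negbTE; rewrite -ltNge.
by rewrite pmulr_llt0.
Qed.

Lemma measurable_pdfE (s : R) (D : set R) : measurable_fun D (fun z => (rayleigh_pdf s z)%:E).
Proof.
apply/measurable_EFinP; apply: measurable_funTS; exact: measurable_pdf.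
Qed.

Lemma scale_int (s k : R) (A : set R) : 0 < s -> 0 < k -> measurable A ->
  (\int[mu]_(z in (fun z => (z * k)%R) @^-1` A) (rayleigh_pdf s z)%:E
   = \int[mu]_(w in A) (rayleigh_pdf (s * k) w)%:E)%E.
Proof.
move=> s0 k0 mA.
have mh : measurable_fun setT ((fun z : measurableTypeR R => (z * k)%R) : _ -> measurableTypeR R).
  exact: mulrr_measurable.
have mhA : measurable ((fun z : R => (z * k)%R) @^-1` A).
  by rewrite -[X in measurable X]setTI; exact: mh.
transitivity (\int[mu]_(z in (fun z => (z * k)%R) @^-1` A)
   (k%:E * ((fun w => (rayleigh_pdf (s * k) w)%:E) \o (fun z => (z * k)%R)) z))%E.
  by apply: eq_integral => z _; rewrite /= -EFinM -pdf_scale.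
rewrite ge0_integralZl_EFin //; last 3 first.
- by move=> z _ /=; rewrite lee_fin pdf_ge0.
- apply: measurableT_comp; last exact: mulrr_measurable. 
  exact: (measurable_pdfE _ setT).
- exact: ltW.
rewrite -(ge0_integral_pushforward mh); last 3 first.
- exact: mA.
- exact: measurable_pdfE.
- by move=> y _; rewrite lee_fin pdf_ge0.
rewrite -(@ge0_integral_mscale _ (measurableTypeR R) R _ A mA (NngNum (ltW k0))); last 2 first.
- exact: measurable_pdfE.
- by move=> y _; rewrite lee_fin pdf_ge0.
apply: eq_measure_integral => X mX _ /=.
by rewrite [RHS](@mscale_lem k k0 X mX).
Qed.

Definition I (X : set R) (f : R -> R) : \bar R := (\int[mu]_(z in X) (f z)%:E)%E.
Arguments I : simpl never.

Lemma I_ge0 (X : set R) (f : R -> R) : (forall z, 0 <= f z) -> (0 <= I X f)%E.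
Proof. by move=> f0; apply: integral_ge0 => z _; rewrite lee_fin. Qed.

Lemma split_I (X Y : set R) (f : R -> R) : measurable X -> measurable Y -> measurable_fun setT f ->
  (forall z, 0 <= f z) -> I X f = (I (X `&` Y) f + I (X `\` Y) f)%E.
Proof.
move=> mX mY mf f0; rewrite /I -ge0_integral_setU //.
- by rewrite setUIDK.
- exact: measurableI.
- exact: measurableD.
- by apply/measurable_EFinP; exact: measurable_funTS.
- by move=> z _; rewrite lee_fin.
- by rewrite disj_set2E; apply/eqP/seteqP; split => [z [[_ h1] [_ h2]] //|z //].
Qed.


Lemma IZ (X : set R) (f : R -> R) (lam : R) : measurable X -> measurable_fun setT f ->
  (forall z, 0 <= f z) -> 0 <= lam -> (lam%:E * I X f)%E = I X (fun z => lam * f z).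
Proof.
move=> mX mf f0 l0; rewrite /I -ge0_integralZl_EFin //.
- by move=> z _; rewrite lee_fin.
- by apply/measurable_EFinP; exact: measurable_funTS.
Qed.

Lemma I_le (X : set R) (f g : R -> R) : measurable X -> measurable_fun setT f ->
  measurable_fun setT g -> (forall z, 0 <= f z) ->
  (forall z, X z -> f z <= g z) -> (I X f <= I X g)%E.
Proof.
move=> mX mf mg f0 fg; apply: ge0_le_integral => //.
all: try (by move=> z _; rewrite lee_fin).
all: try (by apply/measurable_EFinP; exact: measurable_funTS).
all: try (by move=> z Xz; rewrite lee_fin fg).
Qed.

Lemma arith (a b c d e f : \bar R) : (b <= f)%E -> (d <= e)%E ->
  ((a + b) + (c + d) <= (a + e) + (c + f))%E.
Proof.
move=> hb hd; apply: le_trans (leeD (leeD (lexx a) hb) (leeD (lexx c) hd)) _.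
by rewrite addeACA [X in (_ <= X)%E]addeACA [(f + e)%E]addeC.
Qed.

Lemma np (p q : R -> R) (lam : R) (A L : set R) :
  0 <= lam -> measurable A -> measurable L ->
  measurable_fun setT p -> measurable_fun setT q ->
  (forall z, 0 <= p z) -> (forall z, 0 <= q z) ->
  (forall z, A z -> ~ L z -> lam * p z <= q z) ->
  (forall z, L z -> ~ A z -> q z <= lam * p z) ->
  (lam%:E * I A p + I L q <= lam%:E * I L p + I A q)%E.
Proof.
move=> l0 mA mL mp mq p0 q0 h1 h2.
have mlp : measurable_fun setT (fun z => lam * p z).
  by apply: measurable_funM => //; exact: measurable_cst.
have lp0 z : 0 <= lam * p z by rewrite mulr_ge0.
have e1 : (lam%:E * I A p = lam%:E * I (A `&` L) p + lam%:E * I (A `\` L) p)%E.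
  by rewrite (@split_I A L p mA mL mp p0) ge0_muleDr // I_ge0.
have e2 : (lam%:E * I L p = lam%:E * I (A `&` L) p + lam%:E * I (L `\` A) p)%E.
  by rewrite (@split_I L A p mL mA mp p0) ge0_muleDr ?I_ge0 // setIC.
have e3 : I L q = (I (A `&` L) q + I (L `\` A) q)%E.
  by rewrite (@split_I L A q mL mA mq q0) setIC.
have e4 : I A q = (I (A `&` L) q + I (A `\` L) q)%E.
  by rewrite (@split_I A L q mA mL mq q0).
rewrite e1 e2 e3 e4.
apply: arith.
- rewrite IZ //; last exact: measurableD.
  apply: I_le => //; first exact: measurableD.
  by move=> z [Az nLz]; exact: h1.
- rewrite IZ //; last exact: measurableD.
  apply: I_le => //; first exact: measurableD.
  by move=> z [Lz nAz]; exact: h2.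
Qed.


Lemma transfer (p q : R -> R) (lam : R) (A L : set R) :
  0 <= lam -> measurable A -> measurable L ->
  measurable_fun setT p -> measurable_fun setT q ->
  (forall z, 0 <= p z) -> (forall z, 0 <= q z) ->
  (forall z, A z -> ~ L z -> lam * p z <= q z) ->
  (forall z, L z -> ~ A z -> q z <= lam * p z) ->
  (I L p <= I A p)%E -> I L p \is a fin_num ->
  (I L q <= I A q)%E.
Proof.
move=> l0 mA mL mp mq p0 q0 h1 h2 hLA hfin.
have H := @np p q lam A L l0 mA mL mp mq p0 q0 h1 h2.
have H2 : (lam%:E * I L p + I L q <= lam%:E * I A p + I L q)%E.
  by apply: leeD2r; apply: lee_wpmul2l; rewrite ?lee_fin.
have := le_trans H2 H.
by rewrite leeD2lE // fin_numM.
Qed.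

Lemma cdf_lt s a b : 0 < s -> 0 <= a -> a < b -> rayleigh_cdf s a < rayleigh_cdf s b.
Proof.
move=> s0 a0 ab; rewrite /rayleigh_cdf ltrD2l ltrN2 ltr_expR.
rewrite !mulNr ltrN2 ltr_pM2r ?invr_gt0 ?mulr_gt0 ?exprn_gt0 //.
have b0 : 0 < b by apply: le_lt_trans ab.
by rewrite -subr_gt0 subr_sqr mulr_gt0 ?subr_gt0 // ltr_pwDl.
Qed.

Lemma cdf_scale s k t : 0 < s -> 0 < k ->
  rayleigh_cdf (s * k) t = rayleigh_cdf s (k^-1 * t).
Proof.
move=> s0 k0; rewrite /rayleigh_cdf; congr (_ - expR _).
by field; rewrite !gt_eqF.
Qed.

Lemma cdf_inv_spec s p : 0 < s -> 0 < p < 1 ->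
  0 < rayleigh_cdf_inv s p /\ rayleigh_cdf s (rayleigh_cdf_inv s p) = p.
Proof.
move=> s0 /andP[p0 p1].
have ex : exists z, 0 <= z /\ rayleigh_cdf s z = p.
  have hl : 0 <= - (2 * s ^+ 2) * ln (1 - p).
    rewrite mulNr -mulrN; apply: mulr_ge0; first by rewrite mulr_ge0 // sqr_ge0.
    rewrite oppr_ge0 ltW // ln_lt0 //.
    by rewrite subr_gt0 p1 /= ltrBlDr ltrDl.
  exists (Num.sqrt (- (2 * s ^+ 2) * ln (1 - p))); split; first exact: sqrtr_ge0.
  rewrite /rayleigh_cdf sqr_sqrtr //.
  have -> : - (- (2 * s ^+ 2) * ln (1 - p)) / (2 * s ^+ 2) = ln (1 - p).
    by field; rewrite gt_eqF.
  rewrite lnK; last by rewrite posrE subr_gt0.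
  by rewrite opprB addrC subrK.
have [h0 h1] := xgetPex 0 ex.
rewrite /rayleigh_cdf_inv; split => //.
rewrite lt_neqAle h0 andbT; apply/negP => /eqP h.
by move: h1; rewrite -h cdf0 => h'; move: p0; rewrite -h' ltxx.
Qed.


Definition cc (s k : R) := (1 - k ^- 2) / (2 * s ^+ 2).

Lemma ratio s k z : 0 < s -> 0 < k ->
  rayleigh_pdf (s * k) z = k ^- 2 * expR (cc s k * z ^+ 2) * rayleigh_pdf s z.
Proof.
move=> s0 k0; rewrite /rayleigh_pdf; case: ifP => z0; last by rewrite mulr0.
have -> : - z ^+ 2 / (2 * (s * k) ^+ 2) = cc s k * z ^+ 2 + (- z ^+ 2 / (2 * s ^+ 2)).
  by rewrite /cc; field; rewrite !gt_eqF.
rewrite expRD; field; rewrite !gt_eqF //.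
Qed.

Lemma cmp1 s k z t : 0 < s -> 0 < k -> cc s k * t ^+ 2 <= cc s k * z ^+ 2 ->
  k ^- 2 * expR (cc s k * t ^+ 2) * rayleigh_pdf s z <= rayleigh_pdf (s * k) z.
Proof.
move=> s0 k0 h; rewrite ratio //.
apply: ler_wpM2r; first exact: pdf_ge0.
apply: ler_wpM2l; first by rewrite invr_ge0 sqr_ge0.
by rewrite ler_expR.
Qed.

Lemma cmp2 s k z t : 0 < s -> 0 < k -> cc s k * z ^+ 2 <= cc s k * t ^+ 2 ->
  rayleigh_pdf (s * k) z <= k ^- 2 * expR (cc s k * t ^+ 2) * rayleigh_pdf s z.
Proof.
move=> s0 k0 h; rewrite ratio //.
apply: ler_wpM2r; first exact: pdf_ge0.
apply: ler_wpM2l; first by rewrite invr_ge0 sqr_ge0.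
by rewrite ler_expR.
Qed.

Lemma cc_ge0 s k : 0 < s -> 1 <= k -> 0 <= cc s k.
Proof.
move=> s0 k1; apply: divr_ge0; last by rewrite mulr_ge0 // sqr_ge0.
rewrite subr_ge0.
rewrite invf_le1 ?exprn_gt0 ?(lt_le_trans ltr01) //.
by rewrite expr_ge1 // (le_trans ler01).
Qed.

Lemma cc_le0 s k : 0 < s -> 0 < k -> k <= 1 -> cc s k <= 0.
Proof.
move=> s0 k0 k1; rewrite /cc pmulr_lle0 ?invr_gt0 ?mulr_gt0 ?exprn_gt0 // subr_le0.
by rewrite invf_ge1 ?exprn_gt0 // exprn_ile1 // ltW.
Qed.

End R.

Theorem theorem1 (R : realType) (m : nat) (Y : finType)
  (f : 'rV[R]_m -> Y) (psi : R -> 'rV[R]_m -> 'rV[R]_m) (x : 'rV[R]_m)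
  (sigma : R) (cA : Y) (pA_lo pB_hi gamma1 gamma2 : R) :
  mult_composable psi ->
  0 < sigma ->
  (forall c : Y, measurable [set z : R | 0 < z /\ f (psi z x) = c]) ->
  0 < pA_lo < 1 -> 0 < pB_hi < 1 ->
  (pA_lo%:E <= smoothed_prob f psi sigma x cA)%E ->
  pB_hi < pA_lo ->
  (forall cB : Y, cB != cA -> (smoothed_prob f psi sigma x cB <= pB_hi%:E)%E) ->
  0 < gamma1 <= 1 ->
  rayleigh_cdf sigma (gamma1^-1 * rayleigh_cdf_inv sigma pB_hi)
    + rayleigh_cdf sigma (gamma1^-1 * rayleigh_cdf_inv sigma (1 - pA_lo)) = 1 ->
  1 <= gamma2 ->
  rayleigh_cdf sigma (gamma2^-1 * rayleigh_cdf_inv sigma pA_lo)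
    + rayleigh_cdf sigma (gamma2^-1 * rayleigh_cdf_inv sigma (1 - pB_hi)) = 1 ->
  forall gamma : R, gamma1 < gamma < gamma2 ->
    smoothed_pred f psi sigma (psi gamma x) cA.
Proof.
move=> comp s0 mAc hA01 hB01 hA pBA hB /andP[g10 g11] eq1 g21 eq2 g /andP[g1g gg2].
have /andP[pA0 pA1] := hA01.
have /andP[pB0 pB1] := hB01.
have g0 : 0 < g := lt_trans g10 g1g.
have sg0 : 0 < sigma * g by rewrite mulr_gt0.
pose Ac := fun c => [set z : R | 0 < z /\ f (psi z x) = c].
have key c : smoothed_prob f psi sigma (psi g x) c = I (Ac c) (rayleigh_pdf (sigma * g)).
  rewrite /smoothed_prob /rayleigh_prob /I -scale_int //; last exact: mAc.
  have -> : [set z | 0 < z /\ f (psi z (psi g x)) = c] = (fun z => (z * g)%R) @^-1` Ac c.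
    apply/seteqP; split => z /= [z0 h]; split.
    - by rewrite mulr_gt0.
    - by rewrite -comp.
    - by move: z0; rewrite pmulr_lgt0.
    - by rewrite comp //; move: z0; rewrite pmulr_lgt0.
  by [].
have Pdef c : smoothed_prob f psi sigma x c = I (Ac c) (rayleigh_pdf sigma) by [].
have mp := @measurable_pdf R sigma.
have mq := @measurable_pdf R (sigma * g).
have p0 := @pdf_ge0 R sigma.
have q0 := @pdf_ge0 R (sigma * g).
move=> c' nc; rewrite !key.
have hc' := hB c' nc; rewrite Pdef in hc'.
rewrite Pdef in hA.
have fin' : I (Ac c') (rayleigh_pdf sigma) \is a fin_num.
  rewrite ge0_fin_numE ?I_ge0 //; exact: le_lt_trans hc' (ltry _).
have lam0 t : 0 <= g ^- 2 * expR (cc sigma g * t ^+ 2).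
  by rewrite mulr_ge0 ?expR_ge0 // invr_ge0 sqr_ge0.
have [g1|g1] := leP 1 g.
- have hB01' : 0 < 1 - pB_hi < 1 by apply/andP; split; lra.
  have [tA0 htA] := @cdf_inv_spec R sigma pA_lo s0 hA01.
  have [tB0 htB] := @cdf_inv_spec R sigma (1 - pB_hi) s0 hB01'.
  set tA := rayleigh_cdf_inv sigma pA_lo in tA0 htA eq2 *.
  set tB := rayleigh_cdf_inv sigma (1 - pB_hi) in tB0 htB eq2 *.
  pose LA : set R := `[0, tA]%classic.
  pose LB : set R := `[tB, +oo[%classic.
  have IAp : I LA (rayleigh_pdf sigma) = pA_lo%:E by rewrite /I lower_int // ?ltW // htA.
  have IAq : I LA (rayleigh_pdf (sigma * g)) = (rayleigh_cdf sigma (g^-1 * tA))%:E.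
    by rewrite /I lower_int // ?ltW // cdf_scale.
  have IBp : I LB (rayleigh_pdf sigma) = pB_hi%:E.
    by rewrite /I upper_int // ?ltW // htB opprB addrC subrK.
  have IBq : I LB (rayleigh_pdf (sigma * g)) = (1 - rayleigh_cdf sigma (g^-1 * tB))%:E.
    by rewrite /I upper_int // ?ltW // cdf_scale.
  have cc0 := @cc_ge0 R sigma g s0 g1.
  have low : (I LA (rayleigh_pdf (sigma * g)) <= I (Ac cA) (rayleigh_pdf (sigma * g)))%E.
    apply: (@transfer _ _ _ (g ^- 2 * expR (cc sigma g * tA ^+ 2))) => //.
    all: try exact: mAc.
    all: try exact: measurable_itv.
    all: try exact: measurable_pdf.
    - move=> z [z0 _] nL; apply: cmp1 => //; apply: ler_wpM2l => //.
      have ztA : tA < z.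
        by rewrite ltNge; apply/negP => h; apply: nL; rewrite /LA /LB /= in_itv /= (ltW z0) h.
      nra.
    - move=> z; rewrite /LA /LB /= in_itv /= => /andP[z0 ztA] _; apply: cmp2 => //.
      apply: ler_wpM2l => //; nra.
    - by rewrite IAp.
    - by rewrite IAp.
  have up : (I (Ac c') (rayleigh_pdf (sigma * g)) <= I LB (rayleigh_pdf (sigma * g)))%E.
    apply: (@transfer _ _ _ (g ^- 2 * expR (cc sigma g * tB ^+ 2))) => //.
    all: try exact: mAc.
    all: try exact: measurable_itv.
    all: try exact: measurable_pdf.
    - move=> z; rewrite /LA /LB /= in_itv /= andbT => ztB _; apply: cmp1 => //.
      apply: ler_wpM2l => //; nra.
    - move=> z [z0 _] nL; apply: cmp2 => //; apply: ler_wpM2l => //.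
      have ztB : z < tB.
        by rewrite ltNge; apply/negP => h; apply: nL; rewrite /LA /LB /= in_itv /= h.
      nra.
    - by rewrite IBp.
  have ig : gamma2^-1 < g^-1 by rewrite ltf_pV2 ?posrE // (lt_le_trans ltr01 g21).
  have gi0 : 0 <= gamma2^-1 by rewrite invr_ge0 (le_trans ler01 g21).
  have h1 : rayleigh_cdf sigma (gamma2^-1 * tA) < rayleigh_cdf sigma (g^-1 * tA).
    by apply: cdf_lt => //; [rewrite mulr_ge0 // ltW | rewrite ltr_pM2r].
  have h2 : rayleigh_cdf sigma (gamma2^-1 * tB) < rayleigh_cdf sigma (g^-1 * tB).
    by apply: cdf_lt => //; [rewrite mulr_ge0 // ltW | rewrite ltr_pM2r].
  have strict : 1 - rayleigh_cdf sigma (g^-1 * tB) < rayleigh_cdf sigma (g^-1 * tA) by lra.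
  apply: (le_lt_trans up); rewrite IBq; apply: (lt_le_trans _ low).
  by rewrite IAq lte_fin.
- have hA01' : 0 < 1 - pA_lo < 1 by apply/andP; split; lra.
  have [tA0 htA] := @cdf_inv_spec R sigma (1 - pA_lo) s0 hA01'.
  have [tB0 htB] := @cdf_inv_spec R sigma pB_hi s0 hB01.
  set tA := rayleigh_cdf_inv sigma (1 - pA_lo) in tA0 htA eq1 *.
  set tB := rayleigh_cdf_inv sigma pB_hi in tB0 htB eq1 *.
  pose LA : set R := `[tA, +oo[%classic.
  pose LB : set R := `[0, tB]%classic.
  have IAp : I LA (rayleigh_pdf sigma) = pA_lo%:E.
    by rewrite /I upper_int // ?ltW // htA opprB addrC subrK.
  have IAq : I LA (rayleigh_pdf (sigma * g)) = (1 - rayleigh_cdf sigma (g^-1 * tA))%:E.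
    by rewrite /I upper_int // ?ltW // cdf_scale.
  have IBp : I LB (rayleigh_pdf sigma) = pB_hi%:E by rewrite /I lower_int // ?ltW // htB.
  have IBq : I LB (rayleigh_pdf (sigma * g)) = (rayleigh_cdf sigma (g^-1 * tB))%:E.
    by rewrite /I lower_int // ?ltW // cdf_scale.
  have cc0 := @cc_le0 R sigma g s0 g0 (ltW g1).
  have low : (I LA (rayleigh_pdf (sigma * g)) <= I (Ac cA) (rayleigh_pdf (sigma * g)))%E.
    apply: (@transfer _ _ _ (g ^- 2 * expR (cc sigma g * tA ^+ 2))) => //.
    all: try exact: mAc.
    all: try exact: measurable_itv.
    all: try exact: measurable_pdf.
    - move=> z [z0 _] nL; apply: cmp1 => //; apply: ler_wnM2l => //.
      have ztA : z < tA.
        by rewrite ltNge; apply/negP => h; apply: nL; rewrite /LA /LB /= in_itv /= h.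
      nra.
    - move=> z; rewrite /LA /LB /= in_itv /= andbT => ztA _; apply: cmp2 => //.
      apply: ler_wnM2l => //; nra.
    - by rewrite IAp.
    - by rewrite IAp.
  have up : (I (Ac c') (rayleigh_pdf (sigma * g)) <= I LB (rayleigh_pdf (sigma * g)))%E.
    apply: (@transfer _ _ _ (g ^- 2 * expR (cc sigma g * tB ^+ 2))) => //.
    all: try exact: mAc.
    all: try exact: measurable_itv.
    all: try exact: measurable_pdf.
    - move=> z; rewrite /LA /LB /= in_itv /= => /andP[z0 ztB] _; apply: cmp1 => //.
      apply: ler_wnM2l => //; nra.
    - move=> z [z0 _] nL; apply: cmp2 => //; apply: ler_wnM2l => //.
      have ztB : tB < z.
        by rewrite ltNge; apply/negP => h; apply: nL; rewrite /LA /LB /= in_itv /= (ltW z0) h.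
      nra.
    - by rewrite IBp.
  have ig : g^-1 < gamma1^-1 by rewrite ltf_pV2 ?posrE.
  have h1 : rayleigh_cdf sigma (g^-1 * tA) < rayleigh_cdf sigma (gamma1^-1 * tA).
    by apply: cdf_lt => //; [rewrite mulr_ge0 ?invr_ge0 ?ltW | rewrite ltr_pM2r].
  have h2 : rayleigh_cdf sigma (g^-1 * tB) < rayleigh_cdf sigma (gamma1^-1 * tB).
    by apply: cdf_lt => //; [rewrite mulr_ge0 ?invr_ge0 ?ltW | rewrite ltr_pM2r].
  have strict : rayleigh_cdf sigma (g^-1 * tB) < 1 - rayleigh_cdf sigma (g^-1 * tA) by lra.
  apply: (le_lt_trans up); rewrite IBq; apply: (lt_le_trans _ low).
  by rewrite IAq lte_fin.
Qed.
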